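(* For integers $b\ge 0$ and $c\ge 2b+1$, $$\mathrm{gf}(2b+1,b,c,0)\big|_{X=Y=1}=2^{2b+1-c}\,q^{b(2b+1)-\frac12(c-1)c}\,\frac{(q^{4b+4};q^4)_{c-2b-1}}{(q^2;q^2)_{c-2b-1}}.$$
   Context: $X,Y,q$ are indeterminates and $(u;p)_n=\prod_{j=0}^{n-1}(1-up^j)$. Lattice paths in $\mathbb Z\times\mathbb Z$ use unit steps right, $(s,t)\to(s+1,t)$, and down, $(s,t)\to(s,t-1)$; a right step from $(s,t)$ has weight $\frac{Xq^{s-2t}+Yq^{2t-s}}{2}$, a down step weight $1$, a path's weight is the product of its step weights, and $\mathrm{gf}(a,b,c,d)$ is the sum of the weights of all paths from $(a,b)$ to $(c,d)$. *)

(* Defs.v *)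
From HB Require Import structures.
From mathcomp Require Import all_boot all_order all_algebra.
From mathcomp Require Import fraction.
Set Implicit Arguments. Unset Strict Implicit. Unset Printing Implicit Defensive.
Import Order.TTheory GRing.Theory Num.Theory.
Local Open Scope ring_scope.

Definition qpoch (F : comPzRingType) (u p : F) (n : nat) : F :=
  \prod_(j < n) (1 - u * p ^+ j).

Definition right_w (F : fieldType) (X Y q : F) (s t : int) : F :=
  (X * q ^ (s - 2 * t) + Y * q ^ (2 * t - s)) / 2%:R.

(* Weight of a lattice path starting at (s,t), encoded by its sequence of
   steps: true = right step (s,t)->(s+1,t), false = down step (s,t)->(s,t-1)
   (down steps have weight 1). *)
Fixpoint path_weight (F : fieldType) (X Y q : F) (s t : int) (p : seq bool)
  : F :=
  match p with
  | [::] => 1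
  | true :: p' => right_w X Y q s t * path_weight X Y q (s + 1) t p'
  | false :: p' => path_weight X Y q s (t - 1) p'
  end.

(* gf(a,b,c,d): sum of weights of all right/down lattice paths from (a,b)
   to (c,d).  Such a path consists of exactly c-a right steps and b-d down
   steps in some order (and there is none unless a <= c and d <= b). *)
Definition gf (F : fieldType) (X Y q : F) (a b c d : int) : F :=
  if (a <= c) && (d <= b) then
    \sum_(p : (`|c - a| + `|b - d|)%N.-tuple bool | count id p == `|c - a|%N)
       path_weight X Y q a b p
  else 0.

Definition Qq : fieldType := {fraction {poly rat}}.
Definition qv : Qq := @FracField.tofrac _ ('X : {poly rat}).

(* Main.v *)
Require Import Defs.
From HB Require Import structures.
From mathcomp Require Import all_boot all_order all_algebra fraction zify ring.
Import Order.TTheory GRing.Theory Num.Theory.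
Local Open Scope ring_scope.

Lemma sum_cons (R : zmodType) n (P : pred (seq bool)) (f : seq bool -> R) :
  \sum_(t : n.+1.-tuple bool | P t) f t =
  \sum_(t : n.-tuple bool | P (true :: t)) f (true :: t) +
  \sum_(t : n.-tuple bool | P (false :: t)) f (false :: t).
Proof.
rewrite (reindex (fun u : bool * n.-tuple bool => [tuple of u.1 :: u.2])) /=; last first.
  exists (fun t : n.+1.-tuple bool => (thead t, (behead_tuple t : n.-tuple bool))).
    by move=> [x t] _; congr pair; apply: val_inj.
  by move=> t _; rewrite [in RHS](tuple_eta t).
rewrite -(pair_big_dep xpredT (fun x (t : n.-tuple bool) => P (x :: t))
           (fun x (t : n.-tuple bool) => f (x :: t))) /=.
by rewrite big_bool /= addrC.
Qed.

Lemma sum_rev (R : zmodType) n (P : pred (seq bool)) (f : seq bool -> R) :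
  \sum_(t : n.-tuple bool | P t) f t =
  \sum_(t : n.-tuple bool | P (rev t)) f (rev t).
Proof.
have inj : injective (@rev_tuple n bool).
  by move=> t1 t2 /(congr1 val) /= /(congr1 rev); rewrite !revK => /val_inj.
by rewrite (reindex_inj inj).
Qed.

Lemma sum_rcons (R : zmodType) n (P : pred (seq bool)) (f : seq bool -> R) :
  \sum_(t : n.+1.-tuple bool | P t) f t =
  \sum_(t : n.-tuple bool | P (rcons t true)) f (rcons t true) +
  \sum_(t : n.-tuple bool | P (rcons t false)) f (rcons t false).
Proof.
rewrite (@sum_rev _ _ P f) (@sum_cons _ _ (fun s => P (rev s)) (fun s => f (rev s))) /=.
rewrite (@sum_rev _ _ (fun s => P (rcons s true)) (fun s => f (rcons s true))).
rewrite (@sum_rev _ _ (fun s => P (rcons s false)) (fun s => f (rcons s false))) /=.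
by congr (_ + _); apply: eq_big => t; rewrite rev_cons.
Qed.

Definition w (k : int) : Qq := (qv ^ k + qv ^ (- k)) / 2%:R.

Fixpoint pw (k : int) (p : seq bool) : Qq :=
  match p with
  | [::] => 1
  | true :: p' => w k * pw (k + 1) p'
  | false :: p' => pw (k + 2) p'
  end.

Lemma path_weight_pw s t p : path_weight 1 1 qv s t p = pw (s - 2 * t) p.
Proof.
elim: p s t => [|[] p IH] s t //=.
  rewrite IH /right_w /w !mul1r opprB; congr (_ * pw _ _); ring.
rewrite IH; congr pw; ring.
Qed.

Lemma pw_rcons k p x : pw k (rcons p x) =
  pw k p * (if x then w (k + (count id p)%:Z + 2 * (count negb p)%:Z) else 1).
Proof.
elim: p k => [|[] p IH] k /=.
- by case: x; rewrite /= ?mulr0 ?addr0 ?mul1r ?mulr1.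
- rewrite IH mulrA; case: x {IH} => //; congr (_ * w _); lia.
- rewrite IH; case: x {IH} => //; congr (_ * w _); lia.
Qed.

Definition Tn (k : int) (n r : nat) : Qq :=
  \sum_(t : n.-tuple bool | count id t == r) pw k t.

Lemma Tn_big k n r : (n < r)%N -> Tn k n r = 0.
Proof.
move=> lt; apply: big1 => t /eqP ct; exfalso.
have := count_size id t; rewrite size_tuple ct; lia.
Qed.

Lemma Tn0 k n : Tn k n 0 = 1.
Proof.
elim: n k => [|n IH] k.
  by rewrite /Tn (big_pred1 [tuple]) // => t; rewrite tuple0 /=.
rewrite /Tn (@sum_rcons _ _ (fun s => count id s == 0%N) (pw k)) /=.
rewrite big_pred0; last by move=> t; rewrite -cats1 count_cat /= addn1.
rewrite add0r -[RHS](IH k); apply: eq_big => t.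
  by rewrite -cats1 count_cat /= !addn0.
by move=> _; rewrite pw_rcons mulr1.
Qed.

Lemma Tn_rec k n r : (r <= n)%N ->
  Tn k n.+1 r.+1 = w (k + r%:Z + 2 * (n - r)%N%:Z) * Tn k n r + Tn k n r.+1.
Proof.
move=> le.
rewrite /Tn (@sum_rcons _ _ (fun s => count id s == r.+1) (pw k)) /= mulr_sumr.
congr (_ + _); apply: eq_big => t.
- by rewrite -cats1 count_cat /= addn1.
- move/eqP=> ct; rewrite pw_rcons /= mulrC.
  have {}ct : count id t = r by move: ct; rewrite -cats1 count_cat /=; lia.
  have := count_predC id t; rewrite size_tuple ct => h.
  have h2 : count negb t = count (predC id) t by apply: eq_count.
  have -> : count negb t = (n - r)%N by lia.
  congr (w _ * _); lia.
- by rewrite -cats1 count_cat /= !addn0.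
- by move=> _; rewrite pw_rcons mulr1.
Qed.

Lemma qv_neq0 : qv != 0.
Proof. by rewrite /qv tofrac_eq0 polyX_eq0. Qed.

Lemma two_neq0 : (2%:R : Qq) != 0.
Proof.
rewrite -(rmorph_nat (@FracField.tofrac _)) tofrac_eq0 -polyC_natr polyC_eq0.

by rewrite pnatr_eq0.
Qed.
Lemma qvX_neq1 k : (0 < k)%N -> qv ^+ k != 1.
Proof.
move=> kp; rewrite /qv -tofracXn -tofrac1 tofrac_eq.
apply/negP => /eqP h; have := congr1 (fun p : {poly rat} => size p) h.
rewrite /= size_polyXn size_poly1 => -[]. 
by move=> e; rewrite e in kp.
Qed.
Lemma w_gen (F : fieldType) (a : F) : a != 0 -> (2%:R : F) != 0 ->
  2%:R * a * ((a + a^-1) / 2%:R) = a * a + 1.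
Proof.
move=> ha h2; rewrite -mulrA mulrCA [2%:R * _]mulrC divfK // mulrDr mulfV //.
Qed.

Lemma w_nat m : 2%:R * qv ^+ m * w m%:Z = qv ^+ m * qv ^+ m + 1.
Proof.
rewrite /w -invr_expz -exprnP.
apply: w_gen; last exact: two_neq0.
by rewrite expf_neq0 // qv_neq0.
Qed.

Lemma alg_step (F : comRingType) (two twon a a' a'' Dn T1 T2 W s v P1 : F) :
  two * (s * v) * W = (s * v) * (s * v) + 1 ->
  twon * a * Dn * T1 = P1 ->
  (two * twon) * a' * (Dn * (1 - s * s)) * T2 = (1 - v * v) * P1 ->
  a'' = a * (s * v) -> a'' = a' * (s * s) ->
  (two * twon) * a'' * (Dn * (1 - s * s)) * (W * T1 + T2) =
  P1 * (1 - (s * v) * (s * v) * (s * s)).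
Proof.
move=> hW h1 h2 e1 e2; rewrite mulrDr {1}e1 e2.
have -> : two * twon * (a * (s * v)) * (Dn * (1 - s * s)) * (W * T1) =
  (1 - s * s) * (two * (s * v) * W) * (twon * a * Dn * T1) by ring.
have -> : two * twon * (a' * (s * s)) * (Dn * (1 - s * s)) * T2 =
  (s * s) * ((two * twon) * a' * (Dn * (1 - s * s)) * T2) by ring.
rewrite hW h1 h2; ring.
Qed.

Lemma alg_base (F : comRingType) (two twon a a'' Dn T1 W s P1 : F) :
  two * s * W = s * s + 1 ->
  twon * a * Dn * T1 = P1 ->
  a'' = a * s ->
  (two * twon) * a'' * (Dn * (1 - s * s)) * (W * T1 + 0) =
  P1 * (1 - s * s * (s * s)).
Proof.
move=> hW h1 e1; rewrite addr0 e1.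
have -> : two * twon * (a * s) * (Dn * (1 - s * s)) * (W * T1) =
  (1 - s * s) * (two * s * W) * (twon * a * Dn * T1) by ring.
rewrite hW h1; ring.
Qed.

Fixpoint tri n := if n is n'.+1 then (tri n' + n)%N else 0%N.
Definition E n b := (tri n + 2 * n * b)%N.
Definition Dq n := qpoch (qv ^+ 2) (qv ^+ 2) n.
Definition Pq n b := qpoch (qv ^+ (4 * b + 4)) (qv ^+ 4) n.

Lemma Dq_S n : Dq n.+1 = Dq n * (1 - qv ^+ n.+1 * qv ^+ n.+1).
Proof.
rewrite /Dq /qpoch big_ord_recr /=; congr (_ * (1 - _)).
rewrite -!exprM -!exprD; congr (_ ^+ _); lia.
Qed.

Lemma Pq_S n b : Pq n.+1 b = Pq n b * (1 - qv ^+ (4 * n + 4 * b + 4)).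
Proof.
rewrite /Pq /qpoch big_ord_recr /=; congr (_ * (1 - _)).
rewrite -!exprM -!exprD; congr (_ ^+ _); lia.
Qed.

Lemma Pq_Sl n b : Pq n.+1 b = (1 - qv ^+ (4 * b + 4)) * Pq n b.+1.
Proof.
rewrite /Pq /qpoch big_ord_recl /= expr0 mulr1; congr (_ * _).
apply: eq_bigr => j _; congr (1 - _).
rewrite -!exprM -!exprD; congr (_ ^+ _); rewrite /bump /=; lia.
Qed.

Lemma key b n :
  (2%:R : Qq) ^+ n * qv ^+ (E n b) * Dq n * Tn 1 (n + b) n = Pq n b.
Proof.
elim: b n => [|b IHb] n.
  elim: n => [|n IHn].
    by rewrite Tn0 /Dq /Pq /qpoch !big_ord0 /E /= !mulr1.
  rewrite addn0 Tn_rec // subnn (@Tn_big _ n n.+1) //.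
  have hP : Pq n.+1 0 = Pq n 0 *
      (1 - qv ^+ n.+1 * qv ^+ n.+1 * (qv ^+ n.+1 * qv ^+ n.+1)).
    by rewrite Pq_S -!exprD; congr (_ * (1 - _ ^+ _)); lia.
  rewrite Dq_S hP (exprS (2%:R : Qq)).
  have hW : 2%:R * qv ^+ n.+1 * w (1 + n%:Z + 2 * 0%Z) = qv ^+ n.+1 * qv ^+ n.+1 + 1.
    have -> : (1 + n%:Z + 2 * 0%Z) = (n.+1)%:Z by lia.
    exact: w_nat.
  have h1 : (2%:R : Qq) ^+ n * qv ^+ (E n 0) * Dq n * Tn 1 n n = Pq n 0.
    by move: IHn; rewrite addn0.
  have e1 : qv ^+ E n.+1 0 = qv ^+ (E n 0) * qv ^+ n.+1.
    by rewrite -exprD; congr (_ ^+ _); rewrite /E /=; lia.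
  exact: (@alg_base _ _ _ _ _ _ _ _ _ _ hW h1 e1).
elim: n => [|n IHn].
  by rewrite Tn0 /Dq /Pq /qpoch !big_ord0 /E /= !mulr1.
rewrite addSn Tn_rec; last by lia.
have -> : (n + b.+1 - n = b.+1)%N by lia.
rewrite Dq_S.
have hP : Pq n.+1 b.+1 = Pq n b.+1 *
  (1 - qv ^+ n.+1 * qv ^+ (2 * b + 2) * (qv ^+ n.+1 * qv ^+ (2 * b + 2))
     * (qv ^+ n.+1 * qv ^+ n.+1)).
  by rewrite Pq_S -!exprD; congr (_ * (1 - _ ^+ _)); lia.
rewrite hP (exprS (2%:R : Qq)).
have hW : 2%:R * (qv ^+ n.+1 * qv ^+ (2 * b + 2)) * w (1 + n%:Z + 2 * (b.+1)%:Z)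
   = (qv ^+ n.+1 * qv ^+ (2 * b + 2)) * (qv ^+ n.+1 * qv ^+ (2 * b + 2)) + 1.
  rewrite -exprD.
  have -> : (1 + n%:Z + 2 * (b.+1)%:Z) = (n.+1 + (2 * b + 2))%N%:Z by lia.
  exact: w_nat.
have h2 : (2%:R * 2%:R ^+ n) * qv ^+ E n.+1 b * (Dq n * (1 - qv ^+ n.+1 * qv ^+ n.+1))
    * Tn 1 (n + b.+1) n.+1 = (1 - qv ^+ (2 * b + 2) * qv ^+ (2 * b + 2)) * Pq n b.+1.
  rewrite -addSnnS -Dq_S -(exprS (2%:R : Qq)) IHb Pq_Sl -exprD; congr ((1 - _ ^+ _) * _); lia.
have e1 : qv ^+ E n.+1 b.+1 = qv ^+ E n b.+1 * (qv ^+ n.+1 * qv ^+ (2 * b + 2)).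
  by rewrite -exprD -exprD; congr (_ ^+ _); rewrite /E /=; nia.
have e2 : qv ^+ E n.+1 b.+1 = qv ^+ E n.+1 b * (qv ^+ n.+1 * qv ^+ n.+1).
  by rewrite -!exprD; congr (_ ^+ _); rewrite /E /=; nia.
exact: (@alg_step _ _ _ _ _ _ _ _ _ _ _ _ _ hW IHn h2 e1 e2).
Qed.

Lemma solve_gen (F : fieldType) (a b d T P : F) : a != 0 -> b != 0 -> d != 0 ->
  a * b * d * T = P -> T = a^-1 * b^-1 * P / d.
Proof. by move=> ha hb hd <-; field; rewrite ha hb hd. Qed.

Lemma tri2 m : (tri m * 2 = m * m.+1)%N.
Proof. elim: m => //= m IH; nia. Qed.

Lemma Dq_neq0 n : Dq n != 0.
Proof.
rewrite /Dq /qpoch; apply/prodf_neq0 => j _.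
rewrite subr_eq0 eq_sym -exprM -exprD; apply: qvX_neq1; lia.
Qed.

Lemma exp_eq b c : (2 * b + 1 <= c)%N ->
  ((c.-1 * c) %/ 2 = b * (2 * b + 1) + E (c - (2 * b + 1)) b)%N.
Proof.
move=> hc; set n := (c - (2 * b + 1))%N.
have hcn : c = (n + 2 * b + 1)%N by rewrite /n; lia.
have t := tri2 n.
have -> : (c.-1 * c = (b * (2 * b + 1) + E n b) * 2)%N.
  rewrite /E hcn; nia.
by rewrite mulnK.
Qed.

Theorem mainTheorem9 (b c : nat) (hc : (2 * b + 1 <= c)%N) :
  gf (1 : Qq) 1 qv (2 * b + 1)%N%:Z b%:Z c%:Z 0 =
  (2%:R : Qq) ^ ((2 * b + 1)%N%:Z - c%:Z)
  * qv ^ ((b * (2 * b + 1))%N%:Z - ((c.-1 * c) %/ 2)%N%:Z)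
  * qpoch (qv ^+ (4 * b + 4)) (qv ^+ 4) (c - (2 * b + 1))
  / qpoch (qv ^+ 2) (qv ^+ 2) (c - (2 * b + 1)).
Proof.
rewrite (@exp_eq b c hc).
set n := (c - (2 * b + 1))%N.
have hcn : c = (n + 2 * b + 1)%N by rewrite /n; lia.
rewrite /gf.
have -> : ((2 * b + 1)%N%:Z <= c%:Z) && (0 <= b%:Z) = true.
  by apply/andP; split; lia.
have -> : (`|c%:Z - (2 * b + 1)%N%:Z| = n)%N by rewrite /n; lia.
have -> : (`|b%:Z - 0| = b)%N by lia.
have -> : \sum_(p : (n + b).-tuple bool | count id p == n)
    path_weight (F:=Qq) 1 1 qv (2 * b + 1)%N b p = Tn 1 (n + b) n.
  by apply: eq_bigr => p _; rewrite path_weight_pw; congr pw; lia.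
have -> : ((2 * b + 1)%N%:Z - c%:Z) = - n%:Z by lia.
have -> : ((b * (2 * b + 1))%N%:Z - (b * (2 * b + 1) + E n b)%N%:Z) = - (E n b)%:Z
  by lia.
rewrite -!exprnN.
apply: solve_gen; last exact: (key b n).
- by rewrite expf_neq0 // two_neq0.
- by rewrite expf_neq0 // qv_neq0.
- exact: Dq_neq0.
Qed.
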